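(* Fix $\varepsilon\in(0,1)$, a positive sequence $\lambda_n\to0$, and a nonzero positive semidefinite $2\times2$ matrix $\mathbf{V}$. There exists a finite constant $h(\mathbf{V},\varepsilon)$ such that, for all sufficiently large $n$, $$\Psi^{-1}(\mathbf{V},\varepsilon+\lambda_n)\subset\Psi^{-1}(\mathbf{V},\varepsilon)+h(\mathbf{V},\varepsilon)\lambda_n\mathbf{1},$$ where $\mathbf{1}=(1,1)^T$ and $A+c\mathbf{1}:=\{\mathbf{a}+c\mathbf{1}:\mathbf{a}\in A\}$.
   Context: For a nonzero positive semidefinite $2\times2$ matrix $\mathbf{V}$ and $\varepsilon\in(0,1)$: $\Psi(z_1,z_2;\mathbf{V}):=\Pr(U_1\le z_1,U_2\le z_2)$ for $\mathbf{U}\sim\mathcal{N}(\mathbf{0},\mathbf{V})$, and $\Psi^{-1}(\mathbf{V},\varepsilon):=\{(z_1,z_2)\in\mathbb{R}^2:\Psi(-z_1,-z_2;\mathbf{V})\ge1-\varepsilon\}$. *)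

(* Defs.v *)
From Stdlib Require Import Reals Lra ClassicalEpsilon.
Open Scope R_scope.

Record Mat2 := mkMat2 { m11 : R; m12 : R; m21 : R; m22 : R }.

Definition PSD (V : Mat2) : Prop :=
  m12 V = m21 V /\
  forall x1 x2 : R,
    0 <= x1 * (m11 V * x1 + m12 V * x2) + x2 * (m21 V * x1 + m22 V * x2).

Definition nonzero_mat (V : Mat2) : Prop :=
  ~ (m11 V = 0 /\ m12 V = 0 /\ m21 V = 0 /\ m22 V = 0).

Definition phi (x : R) : R := exp (- (x * x) / 2) / sqrt (2 * PI).

Definition ImproperIntR (f : R -> R) (l : R) : Prop :=
  forall e : R, 0 < e -> exists M : R, forall a b : R, a <= - M -> M <= b ->
    exists pr : Riemann_integrable f a b, Rabs (RiemannInt pr - l) < e.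

Definition IntR (f : R -> R) : R := epsilon (inhabits 0) (ImproperIntR f).

(* Cholesky factor A (lower triangular, A A^T = V for PSD V):
   A = [[a, 0], [b, c]], a = sqrt v11, b = v12 / a, c = sqrt (v22 - v12^2/v11).
   (If v11 = 0 then PSD forces v12 = 0, and Stdlib gives 0/0 = 0.) *)
Definition chol_a (V : Mat2) : R := sqrt (m11 V).
Definition chol_b (V : Mat2) : R := m12 V / sqrt (m11 V).
Definition chol_c (V : Mat2) : R := sqrt (m22 V - m12 V * m12 V / m11 V).

Definition ind2 (p q : R) (z1 z2 : R) : R :=
  if Rle_dec p z1 then (if Rle_dec q z2 then 1 else 0) else 0.

(* Psi(z1,z2;V) = Pr(U1 <= z1, U2 <= z2) with U = A Z ~ N(0,V),
   Z = (Z1,Z2) standard normal; computed as an iterated integral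
   against the density phi(x) phi(y). *)
Definition Psi (z1 z2 : R) (V : Mat2) : R :=
  IntR (fun x => IntR (fun y =>
    phi x * phi y *
    ind2 (chol_a V * x) (chol_b V * x + chol_c V * y) z1 z2)).

Definition PsiInv (V : Mat2) (eps : R) (z : R * R) : Prop :=
  Psi (- fst z) (- snd z) V >= 1 - eps.

(* Main.v *)
Require Import Defs.
From Stdlib Require Import Reals Lra Psatz FunctionalExtensionality ClassicalEpsilon.
From Coquelicot Require Import Coquelicot.
Open Scope R_scope.

Lemma exd_cont (f : R -> R) x : ex_derive f x -> continuous f x.
Proof. intros H. apply (ex_derive_continuous (K:=R_AbsRing) (V:=R_NormedModule)). exact H. Qed.

Lemma exR_cont (f : R -> R) a b : (forall z, Rmin a b <= z <= Rmax a b -> continuous f z) -> ex_RInt f a b.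
Proof. intros H. apply (ex_RInt_continuous (V:=R_CompleteNormedModule)). exact H. Qed.

Definition gg (t : R) : R := exp (- (t * t)).
Definition FF (x : R) : R := RInt gg 0 x.
Definition thf (x t : R) : R := exp (- (x * x) * (1 + t * t)) / (1 + t * t).
Definition Th (x : R) : R := RInt (fun t => thf x t) 0 1.
Definition hh (x : R) : R := FF x * FF x + Th x.

Lemma gg_cont : forall x, continuous gg x.
Proof. intros x. apply exd_cont. unfold gg. auto_derive. auto. Qed.

Lemma gg_exRInt : forall a b, ex_RInt gg a b.
Proof. intros a b. apply exR_cont. intros; apply gg_cont. Qed.

Lemma FF_deriv : forall x, is_derive FF x (gg x).
Proof.
  intros x. apply is_derive_RInt with 0.
  - apply filter_forall. intros y. apply (RInt_correct (V:=R_CompleteNormedModule)), gg_exRInt.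
  - apply gg_cont.
Qed.

Lemma opp1 : forall t, 1 + t * t <> 0.
Proof. intros t. nra. Qed.

Lemma thf_deriv : forall u v, is_derive (fun z => thf z v) u (- 2 * u * exp (- (u * u) * (1 + v * v))).
Proof.
  intros u v. unfold thf. auto_derive.
  - exact I.
  - field. apply opp1.
Qed.

Lemma thf_cont : forall x t, continuous (fun t => thf x t) t.
Proof. intros x t. apply exd_cont. unfold thf. auto_derive. apply opp1. Qed.

Lemma Th_deriv : forall x, is_derive Th x (- 2 * gg x * FF x).
Proof.
  intros x.
  assert (H := is_derive_RInt_param thf 0 1 x).
  assert (E : RInt (fun t => Derive (fun u => thf u t) x) 0 1 = - 2 * gg x * FF x).
  { rewrite (RInt_ext _ (fun t => scal (- 2 * gg x) (scal x (gg (x * t + 0))))).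
    - rewrite (RInt_scal (V:=R_CompleteNormedModule)).
      + rewrite (RInt_comp_lin (V:=R_CompleteNormedModule)). unfold FF. rewrite Rmult_0_r, Rmult_1_r, !Rplus_0_r. reflexivity.
        rewrite Rmult_0_r, Rmult_1_r, !Rplus_0_r. apply gg_exRInt.
      + apply exR_cont. intros z _. apply exd_cont. unfold gg, scal; simpl; unfold mult; simpl. auto_derive. auto.
    - intros t _. replace (Derive (fun u => thf u t) x) with (- 2 * x * exp (- (x * x) * (1 + t * t))) by (symmetry; apply is_derive_unique; apply thf_deriv).
      unfold scal; simpl; unfold mult; simpl. unfold gg.
      replace (- (x * x) * (1 + t * t)) with (- (x * x) + - ((x * t + 0) * (x * t + 0))) by ring.
      rewrite exp_plus. ring. }
  rewrite <- E. apply H.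
  - apply filter_forall. intros y t _. eexists. apply thf_deriv.
  - intros t _. eapply continuity_2d_pt_ext.
    + intros u v. symmetry. apply is_derive_unique. apply thf_deriv.
    + apply continuity_2d_pt_mult.
      * apply continuity_2d_pt_mult. apply continuity_2d_pt_const. apply continuity_2d_pt_id1.
      * apply continuity_1d_2d_pt_comp. apply derivable_continuous_pt, derivable_pt_exp.
        apply continuity_2d_pt_mult. apply continuity_2d_pt_opp. apply continuity_2d_pt_mult; apply continuity_2d_pt_id1.
        apply continuity_2d_pt_plus. apply continuity_2d_pt_const. apply continuity_2d_pt_mult; apply continuity_2d_pt_id2.
  - apply filter_forall. intros y. apply exR_cont. intros; apply thf_cont.
Qed.

Lemma hh_deriv : forall x, is_derive hh x 0.
Proof.
  intros x. unfold hh.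
  replace 0 with (gg x * FF x + FF x * gg x + - 2 * gg x * FF x) by ring.
  apply (is_derive_plus (K:=R_AbsRing) (V:=R_NormedModule)). apply (is_derive_mult (K:=R_AbsRing)); try apply FF_deriv. intros; apply Rmult_comm.
  apply Th_deriv.
Qed.

Lemma atan_deriv : forall t, is_derive atan t (/ (1 + t ^ 2)).
Proof. intros t. apply is_derive_Reals. apply derivable_pt_lim_atan. Qed.

Lemma hh0 : hh 0 = PI / 4.
Proof.
  unfold hh, FF, Th. rewrite RInt_point. unfold zero; simpl.
  rewrite (RInt_ext _ (Derive atan)).
  - rewrite RInt_Derive. rewrite atan_1, atan_0. ring.
    + intros; eexists; apply atan_deriv.
    + intros z _. apply (continuous_ext (fun t => / (1 + t ^ 2))).
      * intros t. symmetry. apply is_derive_unique, atan_deriv.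
      * apply exd_cont. auto_derive. nra.
  - intros t _. rewrite (is_derive_unique _ _ _ (atan_deriv t)). unfold thf.
    replace (- (0 * 0) * (1 + t * t)) with 0 by ring. rewrite exp_0. simpl. field.
    nra.
Qed.

Lemma hh_const : forall x, hh x = PI / 4.
Proof.
  intros x. rewrite <- hh0.
  assert (D : forall z, Derive hh z = 0) by (intros; apply is_derive_unique, hh_deriv).
  assert (E := RInt_Derive hh 0 x).
  rewrite (RInt_ext _ (fun _ => 0)) in E by (intros; apply D).
  rewrite RInt_const in E. unfold scal in E; simpl in E; unfold mult in E; simpl in E.
  assert (hh x - hh 0 = 0).
  { rewrite <- E. ring. intros; eexists; apply hh_deriv.
    intros z _. apply (continuous_ext (fun _ => 0)). intros; symmetry; apply D. apply continuous_const. }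
  lra.
Qed.

Lemma Th_bounds : forall x, 0 <= Th x <= exp (- (x * x)).
Proof.
  intros x. unfold Th. split.
  - apply RInt_ge_0. lra. apply exR_cont; intros; apply thf_cont.
    intros t _. unfold thf. apply Rmult_le_pos. apply Rlt_le, exp_pos. apply Rlt_le, Rinv_0_lt_compat. nra.
  - replace (exp (- (x * x))) with (RInt (fun _ => exp (- (x * x))) 0 1).
    + apply RInt_le. lra. apply exR_cont; intros; apply thf_cont. apply ex_RInt_const.
      intros t Ht. unfold thf.
      assert (exp (- (x * x) * (1 + t * t)) <= exp (- (x * x))).
      { destruct (Req_dec (- (x * x) * (1 + t * t)) (- (x * x))) as [e|e]. rewrite e; lra.
        left. apply exp_increasing. nra. }
      assert (0 < exp (- (x * x) * (1 + t * t))) by apply exp_pos.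
      assert (/ (1 + t * t) <= 1). { rewrite <- Rinv_1. apply Rinv_le_contravar; nra. }
      assert (0 < / (1 + t * t)) by (apply Rinv_0_lt_compat; nra).
      unfold Rdiv. nra.
    + rewrite RInt_const. unfold scal; simpl; unfold mult; simpl. ring.
Qed.

Lemma FF_nonneg : forall x, 0 <= x -> 0 <= FF x.
Proof.
  intros x Hx. unfold FF. apply RInt_ge_0. auto. apply gg_exRInt.
  intros; unfold gg; apply Rlt_le, exp_pos.
Qed.

Lemma FF_sq : forall x, PI / 4 - exp (- (x * x)) <= FF x * FF x <= PI / 4.
Proof.
  intros x. assert (H := hh_const x). unfold hh in H. assert (B := Th_bounds x). lra.
Qed.

Lemma PI_gt2 : 2 < PI.
Proof. assert (H := PI2_1). lra. Qed.

Lemma sqrtPI_pos : 0 < sqrt PI.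
Proof. apply sqrt_lt_R0. assert (HPI := PI_gt2). lra. Qed.

Lemma sqrt2_pos : 0 < sqrt 2.
Proof. apply sqrt_lt_R0. lra. Qed.

Lemma phi_pos : forall x, 0 < phi x.
Proof.
  intros x. unfold phi. apply Rdiv_lt_0_compat. apply exp_pos.
  apply sqrt_lt_R0. assert (HPI := PI_gt2). lra.
Qed.

Lemma phi_even : forall x, phi (- x) = phi x.
Proof. intros x. unfold phi. replace (- x * - x) with (x * x) by ring. reflexivity. Qed.

Lemma phi_cont : forall x, continuous phi x.
Proof.
  intros x. apply exd_cont. unfold phi. auto_derive. exact I.
Qed.

Lemma phi_exRInt : forall a b, ex_RInt phi a b.
Proof. intros a b. apply exR_cont. intros; apply phi_cont. Qed.

Lemma phi_le1 : forall x, phi x <= 1.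
Proof.
  intros x. unfold phi.
  assert (exp (- (x * x) / 2) <= 1).
  { rewrite <- exp_0. destruct (Req_dec (- (x * x) / 2) 0) as [e|e]. rewrite e; lra.
    left; apply exp_increasing. nra. }
  assert (1 <= sqrt (2 * PI)).
  { rewrite <- sqrt_1. apply sqrt_le_1_alt. assert (HPI := PI_gt2). lra. }
  assert (0 < exp (- (x * x) / 2)) by apply exp_pos.
  apply Rle_trans with (exp (- (x * x) / 2)). 2: lra.
  unfold Rdiv. rewrite <- (Rmult_1_r (exp _)) at 2. apply Rmult_le_compat_l. lra.
  rewrite <- Rinv_1. apply Rinv_le_contravar; lra.
Qed.

Lemma phi_mono : forall u R, Rabs u <= R -> phi R <= phi u.
Proof.
  intros u R H. unfold phi. unfold Rdiv. apply Rmult_le_compat_r.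
  left; apply Rinv_0_lt_compat, sqrt_lt_R0. assert (H1 := PI_gt2). lra.
  destruct (Req_dec (- (R * R) * / 2) (- (u * u) * / 2)) as [e|e]. rewrite e; lra.
  left; apply exp_increasing.
  assert (u <= Rabs u) by apply Rle_abs.
  assert (- u <= Rabs u) by (rewrite <- Rabs_Ropp; apply Rle_abs).
  assert (u * u <= R * R) by nra. lra.
Qed.

Definition Phi0 (x : R) : R := RInt phi 0 x.
Definition Phi (x : R) : R := / 2 + Phi0 x.

Lemma Phi0_FF : forall x, Phi0 x = FF (/ sqrt 2 * x) / sqrt PI.
Proof.
  intros x. unfold Phi0, FF.
  assert (S2 := sqrt2_pos). assert (SP := sqrtPI_pos).
  rewrite (RInt_ext _ (fun y => scal (/ sqrt PI) (scal (/ sqrt 2) (gg (/ sqrt 2 * y + 0))))).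
  - rewrite (RInt_scal (V:=R_CompleteNormedModule)).
    + rewrite (RInt_comp_lin (V:=R_CompleteNormedModule)).
      unfold scal; simpl; unfold mult; simpl. rewrite Rmult_0_r, !Rplus_0_r. field. lra.
      apply gg_exRInt.
    + apply exR_cont. intros z _. apply exd_cont. unfold gg, scal; simpl; unfold mult; simpl. auto_derive. auto.
  - intros y _. unfold scal; simpl; unfold mult; simpl. unfold phi, gg.
    rewrite sqrt_mult by (try lra; assert (HP := PI_gt2); lra).
    replace (- ((/ sqrt 2 * y + 0) * (/ sqrt 2 * y + 0))) with (- (y * y) / 2).
    field. split; lra.
    replace ((/ sqrt 2 * y + 0) * (/ sqrt 2 * y + 0)) with (y * y / (sqrt 2 * sqrt 2)) by (field; lra).
    rewrite sqrt_sqrt by lra. field.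
Qed.

Lemma sqrtPI_sq : sqrt PI * sqrt PI = PI.
Proof. apply sqrt_sqrt. assert (HPI := PI_gt2). lra. Qed.

Lemma Phi0_bounds : forall x, 0 <= x -> 0 <= Phi0 x <= / 2 /\ / 2 - Phi0 x <= exp (- (x * x) / 2).
Proof.
  intros x Hx. rewrite Phi0_FF.
  assert (S2 := sqrt2_pos). assert (SP := sqrtPI_pos). assert (P2 := PI_gt2).
  set (y := / sqrt 2 * x).
  assert (Hy : 0 <= y) by (unfold y; apply Rmult_le_pos; [left; apply Rinv_0_lt_compat; lra | lra]).
  assert (F0 := FF_nonneg y Hy). assert (Fs := FF_sq y).
  assert (Ey : exp (- (y * y)) = exp (- (x * x) / 2)).
  { f_equal. unfold y. replace (/ sqrt 2 * x * (/ sqrt 2 * x)) with (x * x / (sqrt 2 * sqrt 2)) by (field; lra).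
    rewrite sqrt_sqrt by lra. field. }
  rewrite Ey in Fs. set (E := exp (- (x * x) / 2)) in *.
  assert (E0 : 0 < E) by apply exp_pos.
  set (F := FF y) in *. set (s := sqrt PI) in *.
  assert (ss : s * s = PI) by apply sqrtPI_sq.
  assert (F <= s / 2) by nra.
  split. split.
  - apply Rdiv_le_0_compat; lra.
  - apply (Rmult_le_reg_r s); auto. unfold Rdiv. rewrite Rmult_assoc, Rinv_l by lra. lra.
  - assert (Hp : / 2 - F / s = (s / 2 - F) / s) by (field; lra). rewrite Hp.
    assert ((s / 2 - F) * (s / 2 + F) <= E) by nra.
    assert (1 < s). { assert (1 * 1 < s * s) by lra. nra. }
    apply (Rmult_le_reg_r s); auto. unfold Rdiv at 1. rewrite Rmult_assoc, Rinv_l by lra.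
    nra.
Qed.

Lemma Phi0_odd : forall x, Phi0 (- x) = - Phi0 x.
Proof.
  intros x. unfold Phi0.
  assert (E := RInt_comp_lin (V:=R_CompleteNormedModule) phi (-1) 0 0 x).
  rewrite Rmult_0_r, Rplus_0_r in E. replace (-1 * x + 0) with (- x) in E by ring.
  rewrite <- E by apply phi_exRInt.
  rewrite (RInt_ext _ (fun y => scal (-1) (phi y))).
  rewrite (RInt_scal (V:=R_CompleteNormedModule)) by apply phi_exRInt.
  unfold scal; simpl; unfold mult; simpl. ring.
  intros y _. replace (-1 * y + 0) with (- y) by ring. rewrite phi_even. reflexivity.
Qed.

Lemma Phi_diff : forall x y, Phi y - Phi x = RInt phi x y.
Proof.
  intros x y. unfold Phi, Phi0.
  rewrite <- (RInt_Chasles (V:=R_CompleteNormedModule) phi 0 x y) by apply phi_exRInt.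
  unfold plus; simpl. ring.
Qed.

Lemma RInt_lower : forall f a b c, a <= b -> ex_RInt f a b ->
  (forall x, a < x < b -> c <= f x) -> (b - a) * c <= RInt f a b.
Proof.
  intros f a b c Hab Hf H.
  replace ((b - a) * c) with (RInt (fun _ => c) a b).
  apply RInt_le; auto. apply ex_RInt_const.
  rewrite RInt_const. unfold scal; simpl; unfold mult; simpl. ring.
Qed.

Lemma RInt_upper : forall f a b c, a <= b -> ex_RInt f a b ->
  (forall x, a < x < b -> f x <= c) -> RInt f a b <= (b - a) * c.
Proof.
  intros f a b c Hab Hf H.
  replace ((b - a) * c) with (RInt (fun _ => c) a b).
  apply RInt_le; auto. apply ex_RInt_const.
  rewrite RInt_const. unfold scal; simpl; unfold mult; simpl. ring.
Qed.

Lemma Phi_incr : forall x y, x < y -> (y - x) * phi (Rmax (Rabs x) (Rabs y)) <= Phi y - Phi x.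
Proof.
  intros x y H. rewrite Phi_diff. apply RInt_lower. lra. apply phi_exRInt.
  intros z Hz. apply phi_mono.
  unfold Rabs, Rmax; repeat destruct Rcase_abs; repeat destruct Rle_dec; lra.
Qed.

Lemma Phi_lt : forall x y, x < y -> Phi x < Phi y.
Proof.
  intros x y H. assert (A := Phi_incr x y H). assert (B := phi_pos (Rmax (Rabs x) (Rabs y))).
  assert (0 < (y - x) * phi (Rmax (Rabs x) (Rabs y))) by (apply Rmult_lt_0_compat; lra). lra.
Qed.

Lemma Phi_le : forall x y, x <= y -> Phi x <= Phi y.
Proof. intros x y [H|H]. left; apply Phi_lt; auto. subst; lra. Qed.

Lemma Phi_tail : forall M, 0 <= M -> Phi (- M) <= exp (- (M * M) / 2) /\ 1 - Phi M <= exp (- (M * M) / 2).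
Proof.
  intros M HM. destruct (Phi0_bounds M HM) as [_ B]. unfold Phi. rewrite Phi0_odd. lra.
Qed.

Lemma Phi_range : forall x, 0 < Phi x < 1.
Proof.
  intros x.
  assert (forall y, 0 <= y -> 0 <= Phi y <= 1 /\ 0 <= Phi (- y) <= 1).
  { intros y Hy. destruct (Phi0_bounds y Hy) as [[A B] _]. unfold Phi. rewrite Phi0_odd. lra. }
  assert (forall y, 0 <= Phi y <= 1).
  { intros y. destruct (Rle_dec 0 y). apply H; auto. replace y with (- - y) by ring. apply H. lra. }
  split.
  - assert (Phi (x - 1) < Phi x) by (apply Phi_lt; lra). specialize (H0 (x - 1)). lra.
  - assert (Phi x < Phi (x + 1)) by (apply Phi_lt; lra). specialize (H0 (x + 1)). lra.
Qed.

Lemma exp_small : forall e, 0 < e -> exists M, 1 <= M /\ forall N, M <= N -> exp (- (N * N) / 2) <= e.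
Proof.
  intros e He. exists (Rmax 1 (2 / e)). split. apply Rmax_l.
  intros N HN. assert (N1 : 1 <= N) by (apply Rle_trans with (Rmax 1 (2 / e)); auto; apply Rmax_l).
  assert (N2 : 2 / e <= N) by (apply Rle_trans with (Rmax 1 (2 / e)); auto; apply Rmax_r).
  replace (- (N * N) / 2) with (- (N * N / 2)) by field. rewrite exp_Ropp.
  assert (X := exp_ineq1_le (N * N / 2)).
  assert (2 <= N * e). { apply (Rmult_le_compat_r e) in N2; [|lra]. unfold Rdiv in N2. rewrite Rmult_assoc, Rinv_l in N2 by lra. lra. }
  apply (Rmult_le_reg_r (exp (N * N / 2))). apply exp_pos. rewrite Rinv_l by (apply Rgt_not_eq, exp_pos).
  nra.
Qed.

Lemma Phi_limits : forall e, 0 < e -> exists M, 1 <= M /\ forall N, M <= N -> Phi (- N) <= e /\ 1 - Phi N <= e.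
Proof.
  intros e He. destruct (exp_small e He) as [M [HM H]]. exists M. split; auto.
  intros N HN. destruct (Phi_tail N) as [A B]. lra. specialize (H N HN). lra.
Qed.

Definition locint (f : R -> R) : Prop := forall a b, ex_RInt f a b.
Definition Imp (f : R -> R) (l : R) : Prop :=
  forall e, 0 < e -> exists M, forall a b, a <= - M -> M <= b -> Rabs (RInt f a b - l) < e.
Definition tail (M : R) : R := Phi (- M) + (1 - Phi M).

Lemma tail_small : forall e, 0 < e -> exists M, 1 <= M /\ forall N, M <= N -> tail N <= e.
Proof.
  intros e He. destruct (Phi_limits (e / 2)) as [M [HM H]]. lra.
  exists M; split; auto. intros N HN. destruct (H N HN). unfold tail. lra.
Qed.

Lemma tail_pos : forall M, 0 <= tail M.
Proof. intros M. unfold tail. destruct (Phi_range (- M)). destruct (Phi_range M). lra. Qed.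

Lemma Imp_ImproperIntR : forall f l, locint f -> Imp f l -> ImproperIntR f l.
Proof.
  intros f l Hf H e He. destruct (H e He) as [M HM]. exists M. intros a b Ha Hb.
  exists (ex_RInt_Reals_0 _ _ _ (Hf a b)). rewrite <- RInt_Reals. apply HM; auto.
Qed.

Lemma ImproperIntR_Imp : forall f l, ImproperIntR f l -> Imp f l.
Proof.
  intros f l H e He. destruct (H e He) as [M HM]. exists M. intros a b Ha Hb.
  destruct (HM a b Ha Hb) as [pr Hpr]. rewrite (RInt_Reals _ _ _ pr). auto.
Qed.

Lemma ImproperIntR_unique : forall f l l', ImproperIntR f l -> ImproperIntR f l' -> l = l'.
Proof.
  intros f l l' H H'.
  destruct (Req_dec l l') as [e|ne]; auto. exfalso.
  set (e := Rabs (l - l') / 2).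
  assert (He : 0 < e) by (unfold e; assert (0 < Rabs (l - l')) by (apply Rabs_pos_lt; lra); lra).
  destruct (H e He) as [M HM]. destruct (H' e He) as [M' HM'].
  set (N := Rmax (Rabs M) (Rabs M')).
  assert (A1 : - N <= - M) by (unfold N; assert (M <= Rabs M) by apply Rle_abs; assert (Rabs M <= Rmax (Rabs M) (Rabs M')) by apply Rmax_l; lra).
  assert (A2 : - N <= - M') by (unfold N; assert (M' <= Rabs M') by apply Rle_abs; assert (Rabs M' <= Rmax (Rabs M) (Rabs M')) by apply Rmax_r; lra).
  destruct (HM (- N) N) as [pr P1]; try lra.
  destruct (HM' (- N) N) as [pr' P2]; try lra.
  rewrite (RiemannInt_P5 pr' pr) in P2.
  assert (Rabs (l - l') <= Rabs (RiemannInt pr - l) + Rabs (RiemannInt pr - l')).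
  { replace (l - l') with (- (RiemannInt pr - l) + (RiemannInt pr - l')) by ring.
    eapply Rle_trans. apply Rabs_triang. rewrite Rabs_Ropp. lra. }
  unfold e in *. lra.
Qed.

Lemma IntR_val : forall f l, locint f -> Imp f l -> IntR f = l.
Proof.
  intros f l Hf H. assert (I := Imp_ImproperIntR f l Hf H).
  unfold IntR. apply (ImproperIntR_unique f). 2: exact I.
  apply epsilon_spec. exists l; auto.
Qed.

Lemma RInt_dom : forall f C a b, a <= b -> ex_RInt f a b -> (forall x, Rabs (f x) <= C * phi x) ->
  Rabs (RInt f a b) <= C * (Phi b - Phi a).
Proof.
  intros f C a b Hab Hf HC.
  assert (E : RInt (fun x => C * phi x) a b = C * (Phi b - Phi a)).
  { rewrite Phi_diff. apply (RInt_scal (V:=R_CompleteNormedModule)). apply phi_exRInt. }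
  assert (Ex : ex_RInt (fun x => C * phi x) a b) by (apply (ex_RInt_scal (V:=R_NormedModule)); apply phi_exRInt).
  assert (Ex' : ex_RInt (fun x => - (C * phi x)) a b) by (apply (ex_RInt_opp (V:=R_NormedModule)); auto).
  apply Rabs_le. split.
  - replace (- (C * (Phi b - Phi a))) with (RInt (fun x => - (C * phi x)) a b).
    apply RInt_le; auto. intros x _. specialize (HC x). apply Rabs_le_between in HC. lra.
    rewrite (RInt_opp (V:=R_CompleteNormedModule)) by auto. rewrite E. reflexivity.
  - rewrite <- E. apply RInt_le; auto. intros x _. specialize (HC x). apply Rabs_le_between in HC. lra.
Qed.

Lemma RInt_Chasles3 : forall f a b c d, locint f -> RInt f a d = RInt f a b + RInt f b c + RInt f c d.
Proof.
  intros f a b c d Hf.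
  rewrite <- (RInt_Chasles (V:=R_CompleteNormedModule) f a c d) by auto.
  rewrite <- (RInt_Chasles (V:=R_CompleteNormedModule) f a b c) by auto.
  reflexivity.
Qed.

Lemma RInt_nest : forall f C M a b, locint f -> (forall x, Rabs (f x) <= C * phi x) -> 0 <= C ->
  0 <= M -> a <= - M -> M <= b -> Rabs (RInt f a b - RInt f (- M) M) <= C * tail M.
Proof.
  intros f C M a b Hf HC C0 M0 Ha Hb.
  rewrite (RInt_Chasles3 f a (- M) M b Hf).
  replace (RInt f a (- M) + RInt f (- M) M + RInt f M b - RInt f (- M) M) with (RInt f a (- M) + RInt f M b) by ring.
  eapply Rle_trans. apply Rabs_triang.
  assert (A := RInt_dom f C a (- M) Ha (Hf _ _) HC).
  assert (B := RInt_dom f C M b Hb (Hf _ _) HC).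
  destruct (Phi_range a). destruct (Phi_range b).
  unfold tail. nra.
Qed.

Lemma Imp_exists : forall f C, locint f -> 0 <= C -> (forall x, Rabs (f x) <= C * phi x) -> exists l, Imp f l.
Proof.
  intros f C Hf C0 HC.
  set (u := fun n : nat => RInt f (- INR n) (INR n)).
  assert (Cc : Cauchy_crit u).
  { intros e He. destruct (tail_small (e / (4 * (C + 1)))) as [M [HM HT]].
    apply Rdiv_lt_0_compat; lra.
    destruct (INR_archimed 1 M) as [N HN]. lra.
    exists N. intros n m Hn Hm. unfold Rdist, u.
    assert (INR N <= INR n) by (apply le_INR; lia). assert (INR N <= INR m) by (apply le_INR; lia).
    assert (A := RInt_nest f C M (- INR n) (INR n) Hf HC C0 ltac:(lra) ltac:(lra) ltac:(lra)).
    assert (B := RInt_nest f C M (- INR m) (INR m) Hf HC C0 ltac:(lra) ltac:(lra) ltac:(lra)).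
    assert (T := HT M (Rle_refl _)). assert (T0 := tail_pos M).
    assert (C * tail M <= (C + 1) * (e / (4 * (C + 1)))) by nra.
    replace ((C + 1) * (e / (4 * (C + 1)))) with (e / 4) in H1 by (field; lra).
    replace (RInt f (- INR n) (INR n) - RInt f (- INR m) (INR m)) with
      ((RInt f (- INR n) (INR n) - RInt f (- M) M) - (RInt f (- INR m) (INR m) - RInt f (- M) M)) by ring.
    eapply Rle_lt_trans. apply Rabs_triang. rewrite Rabs_Ropp. lra. }
  destruct (Rcomplete.R_complete u Cc) as [l Hl]. exists l.
  intros e He. destruct (tail_small (e / (4 * (C + 1)))) as [M [HM HT]].
  apply Rdiv_lt_0_compat; lra.
  exists M. intros a b Ha Hb.
  destruct (Hl (e / 2)) as [N0 HN0]. lra.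
  destruct (INR_archimed 1 (Rmax M (Rmax (- a) b))) as [N HN]. lra.
  set (n := max N N0).
  assert (INR N <= INR n) by (apply le_INR; unfold n; lia).
  assert (Rmax M (Rmax (- a) b) >= M) by (apply Rle_ge, Rmax_l).
  assert (Rmax M (Rmax (- a) b) >= - a) by (apply Rle_ge; eapply Rle_trans; [apply Rmax_l|apply Rmax_r]).
  assert (Rmax M (Rmax (- a) b) >= b) by (apply Rle_ge; eapply Rle_trans; [apply Rmax_r|apply Rmax_r]).
  assert (A := RInt_nest f C M (- INR n) (INR n) Hf HC C0 ltac:(lra) ltac:(lra) ltac:(lra)).
  assert (B := RInt_nest f C M a b Hf HC C0 ltac:(lra) ltac:(lra) ltac:(lra)).
  assert (D := HN0 n ltac:(unfold n; lia)). unfold R_dist, u in D.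
  assert (T := HT M (Rle_refl _)). assert (T0 := tail_pos M).
  assert (HCt : C * tail M <= (C + 1) * (e / (4 * (C + 1)))) by nra.
  replace ((C + 1) * (e / (4 * (C + 1)))) with (e / 4) in HCt by (field; lra).
  replace (RInt f a b - l) with ((RInt f a b - RInt f (- M) M) - (RInt f (- INR n) (INR n) - RInt f (- M) M) + (RInt f (- INR n) (INR n) - l)) by ring.
  eapply Rle_lt_trans. apply Rabs_triang.
  assert (Rabs ((RInt f a b - RInt f (- M) M) - (RInt f (- INR n) (INR n) - RInt f (- M) M)) <= e / 2).
  { eapply Rle_trans. apply Rabs_triang. rewrite Rabs_Ropp. lra. }
  lra.
Qed.

Definition good (f : R -> R) : Prop := locint f /\ exists C, 0 <= C /\ forall x, Rabs (f x) <= C * phi x.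

Lemma IntR_Imp : forall f, good f -> Imp f (IntR f).
Proof.
  intros f [Hf [C [C0 HC]]]. destruct (Imp_exists f C Hf C0 HC) as [l Hl].
  rewrite (IntR_val f l Hf Hl). auto.
Qed.

Lemma Imp_minus : forall f g l m, locint f -> locint g -> Imp f l -> Imp g m -> Imp (fun x => f x - g x) (l - m).
Proof.
  intros f g l m Hf Hg H1 H2 e He.
  destruct (H1 (e / 2)) as [M1 HM1]. lra. destruct (H2 (e / 2)) as [M2 HM2]. lra.
  exists (Rmax M1 M2). intros a b Ha Hb.
  assert (a <= - M1) by (assert (M1 <= Rmax M1 M2) by apply Rmax_l; lra).
  assert (a <= - M2) by (assert (M2 <= Rmax M1 M2) by apply Rmax_r; lra).
  assert (M1 <= b) by (assert (M1 <= Rmax M1 M2) by apply Rmax_l; lra).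
  assert (M2 <= b) by (assert (M2 <= Rmax M1 M2) by apply Rmax_r; lra).
  rewrite (RInt_minus (V:=R_CompleteNormedModule)) by auto. unfold minus, plus, opp; simpl.
  specialize (HM1 a b H H3). specialize (HM2 a b H0 H4).
  replace (RInt f a b + - RInt g a b - (l - m)) with ((RInt f a b - l) - (RInt g a b - m)) by ring.
  eapply Rle_lt_trans. apply Rabs_triang. rewrite Rabs_Ropp. lra.
Qed.

Lemma Imp_scal : forall f k l, locint f -> Imp f l -> Imp (fun x => k * f x) (k * l).
Proof.
  intros f k l Hf H e He.
  destruct (H (e / (Rabs k + 1))) as [M HM]. apply Rdiv_lt_0_compat; auto. assert (0 <= Rabs k) by apply Rabs_pos. lra.
  exists M. intros a b Ha Hb.
  replace (RInt (fun x => k * f x) a b) with (k * RInt f a b) by (symmetry; exact (RInt_scal (V:=R_CompleteNormedModule) f a b k (Hf a b))).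
  replace (k * RInt f a b - k * l) with (k * (RInt f a b - l)) by ring. rewrite Rabs_mult.
  specialize (HM a b Ha Hb). assert (0 <= Rabs k) by apply Rabs_pos.
  assert (Rabs k * Rabs (RInt f a b - l) <= Rabs k * (e / (Rabs k + 1))) by (apply Rmult_le_compat_l; lra).
  assert (Rabs k * (e / (Rabs k + 1)) < e).
  { replace (Rabs k * (e / (Rabs k + 1))) with (e * (Rabs k / (Rabs k + 1))) by (field; lra).
    assert (Rabs k / (Rabs k + 1) < 1). { apply (Rmult_lt_reg_r (Rabs k + 1)). lra. unfold Rdiv. rewrite Rmult_assoc, Rinv_l by lra. lra. }
    nra. }
  lra.
Qed.

Lemma locint_minus : forall f g, locint f -> locint g -> locint (fun x => f x - g x).
Proof. intros f g Hf Hg a b. apply (ex_RInt_minus (V:=R_NormedModule)); auto. Qed.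

Lemma locint_scal : forall f k, locint f -> locint (fun x => k * f x).
Proof. intros f k Hf a b. apply (ex_RInt_scal (V:=R_NormedModule) f a b k); auto. Qed.

Lemma good_minus : forall f g, good f -> good g -> good (fun x => f x - g x).
Proof.
  intros f g [Hf [C [C0 HC]]] [Hg [D [D0 HD]]]. split. apply locint_minus; auto.
  exists (C + D). split. lra. intros x. eapply Rle_trans. apply Rabs_triang. rewrite Rabs_Ropp.
  specialize (HC x). specialize (HD x). lra.
Qed.

Lemma good_scal : forall f k, good f -> good (fun x => k * f x).
Proof.
  intros f k [Hf [C [C0 HC]]]. split. apply locint_scal; auto.
  exists (Rabs k * C). split. apply Rmult_le_pos; auto; apply Rabs_pos.
  intros x. rewrite Rabs_mult. rewrite Rmult_assoc. apply Rmult_le_compat_l. apply Rabs_pos. auto.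
Qed.

Lemma IntR_minus : forall f g, good f -> good g -> IntR (fun x => f x - g x) = IntR f - IntR g.
Proof.
  intros f g Gf Gg. apply IntR_val. apply locint_minus; [apply Gf|apply Gg].
  apply Imp_minus; try apply Gf; try apply Gg; apply IntR_Imp; auto.
Qed.

Lemma IntR_scal : forall f k, good f -> IntR (fun x => k * f x) = k * IntR f.
Proof.
  intros f k Gf. apply IntR_val. apply locint_scal; apply Gf.
  apply Imp_scal. apply Gf. apply IntR_Imp; auto.
Qed.

Lemma IntR_tail : forall f C M, locint f -> 0 <= C -> (forall x, Rabs (f x) <= C * phi x) -> 0 <= M ->
  Rabs (IntR f - RInt f (- M) M) <= C * tail M.
Proof.
  intros f C M Hf C0 HC M0.
  assert (G : good f) by (split; auto; exists C; auto).
  assert (I := IntR_Imp f G).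
  apply Rnot_lt_le. intros Hlt.
  set (e := Rabs (IntR f - RInt f (- M) M) - C * tail M).
  assert (He : 0 < e) by (unfold e; lra).
  destruct (I e He) as [M' HM'].
  set (N := Rmax M (Rabs M')).
  assert (M <= N) by apply Rmax_l.
  assert (M' <= N) by (assert (M' <= Rabs M') by apply Rle_abs; assert (Rabs M' <= N) by apply Rmax_r; lra).
  specialize (HM' (- N) N ltac:(lra) ltac:(lra)).
  assert (A := RInt_nest f C M (- N) N Hf HC C0 M0 ltac:(lra) ltac:(lra)).
  assert (Rabs (IntR f - RInt f (- M) M) <= Rabs (RInt f (- N) N - IntR f) + Rabs (RInt f (- N) N - RInt f (- M) M)).
  { replace (IntR f - RInt f (- M) M) with (- (RInt f (- N) N - IntR f) + (RInt f (- N) N - RInt f (- M) M)) by ring.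
    eapply Rle_trans. apply Rabs_triang. rewrite Rabs_Ropp. lra. }
  unfold e in *. lra.
Qed.

Lemma RInt_nonneg_mono : forall f a b p q, locint f -> (forall x, 0 <= f x) -> a <= p -> p <= q -> q <= b ->
  RInt f p q <= RInt f a b.
Proof.
  intros f a b p q Hf H0 H1 H2 H3.
  rewrite (RInt_Chasles3 f a p q b Hf).
  assert (0 <= RInt f a p) by (apply RInt_ge_0; auto).
  assert (0 <= RInt f q b) by (apply RInt_ge_0; auto).
  lra.
Qed.

Lemma IntR_lower : forall f p q, good f -> (forall x, 0 <= f x) -> p <= q -> RInt f p q <= IntR f.
Proof.
  intros f p q G H0 Hpq. assert (I := IntR_Imp f G).
  apply Rnot_lt_le. intros Hlt.
  set (e := RInt f p q - IntR f). assert (He : 0 < e) by (unfold e; lra).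
  destruct (I e He) as [M HM].
  set (N := Rmax (Rabs M) (Rmax (Rabs p) (Rabs q))).
  assert (Rabs M <= N) by apply Rmax_l.
  assert (Rabs p <= N) by (eapply Rle_trans; [apply Rmax_l|apply Rmax_r]).
  assert (Rabs q <= N) by (eapply Rle_trans; [apply Rmax_r|apply Rmax_r]).
  assert (M <= Rabs M) by apply Rle_abs.
  assert (Hp := proj1 (Rabs_le_between p (Rabs p)) (Rle_refl _)). assert (Hq := proj1 (Rabs_le_between q (Rabs q)) (Rle_refl _)).
  specialize (HM (- N) N ltac:(lra) ltac:(lra)).
  assert (RInt f p q <= RInt f (- N) N) by (apply RInt_nonneg_mono; try apply G; auto; lra).
  apply Rabs_lt_between in HM. unfold e in *. lra.
Qed.

Definition le1 (x y : R) : R := if Rle_dec x y then 1 else 0.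

Lemma exR_ext : forall (f g : R -> R) a b, (forall x, Rmin a b < x < Rmax a b -> f x = g x) -> ex_RInt f a b -> ex_RInt g a b.
Proof. intros f g a b H. apply (ex_RInt_ext (V:=R_NormedModule)). auto. Qed.

Lemma locint_split : forall f g1 g2 p, locint g1 -> locint g2 ->
  (forall x, x < p -> f x = g1 x) -> (forall x, p < x -> f x = g2 x) -> locint f.
Proof.
  intros f g1 g2 p H1 H2 E1 E2 a b.
  apply (ex_RInt_Chasles (V:=R_NormedModule) f a p b).
  - destruct (Rle_dec a p).
    + apply (exR_ext g1). intros x Hx. rewrite Rmin_left, Rmax_right in Hx by auto. symmetry; apply E1; lra. apply H1.
    + apply (exR_ext g2). intros x Hx. rewrite Rmin_right, Rmax_left in Hx by lra. symmetry; apply E2; lra. apply H2.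
  - destruct (Rle_dec p b).
    + apply (exR_ext g2). intros x Hx. rewrite Rmin_left, Rmax_right in Hx by auto. symmetry; apply E2; lra. apply H2.
    + apply (exR_ext g1). intros x Hx. rewrite Rmin_right, Rmax_left in Hx by lra. symmetry; apply E1; lra. apply H1.
Qed.

Lemma locint_const : forall c, locint (fun _ => c).
Proof. intros c a b. apply ex_RInt_const. Qed.

Lemma locint_le : forall h p, locint h -> locint (fun x => h x * le1 x p).
Proof.
  intros h p Hh. apply (locint_split _ h (fun _ => 0) p Hh (locint_const 0)).
  - intros x Hx. unfold le1. destruct Rle_dec; [ring|lra].
  - intros x Hx. unfold le1. destruct Rle_dec; [lra|ring].
Qed.

Lemma locint_ge : forall h p, locint h -> locint (fun x => h x * le1 p x).
Proof.
  intros h p Hh. apply (locint_split _ (fun _ => 0) h p (locint_const 0) Hh).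
  - intros x Hx. unfold le1. destruct Rle_dec; [lra|ring].
  - intros x Hx. unfold le1. destruct Rle_dec; [ring|lra].
Qed.

Lemma locint_ext : forall f g, (forall x, f x = g x) -> locint f -> locint g.
Proof. intros f g E H a b. apply (exR_ext f). intros; auto. apply H. Qed.

Lemma locint_lin : forall h al be, locint h -> locint (fun x => h x * le1 (al * x) be).
Proof.
  intros h al be Hh. destruct (Rtotal_order al 0) as [Hn|[H0|Hp]].
  - apply (locint_ext (fun x => h x * le1 (be / al) x)). 2: apply locint_ge; auto.
    intros x. unfold le1. destruct (Rle_dec (be / al) x); destruct (Rle_dec (al * x) be); auto; exfalso.
    + apply n. apply (Rmult_le_compat_neg_l al) in r; [|lra]. replace (al * (be / al)) with be in r by (field; lra). lra.
    + apply n. apply (Rmult_le_reg_l (- al)). lra. replace (- al * (be / al)) with (- be) by (field; lra). lra.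
  - subst. apply (locint_ext (fun x => le1 0 be * h x)). intros x. rewrite Rmult_0_l. ring.
    apply locint_scal; auto.
  - apply (locint_ext (fun x => h x * le1 x (be / al))). 2: apply locint_le; auto.
    intros x. unfold le1. destruct (Rle_dec x (be / al)); destruct (Rle_dec (al * x) be); auto; exfalso.
    + apply n. apply (Rmult_le_compat_l al) in r; [|lra]. replace (al * (be / al)) with be in r by (field; lra). lra.
    + apply n. apply (Rmult_le_reg_l al). lra. replace (al * (be / al)) with be by (field; lra). lra.
Qed.

Lemma locint_phi : locint phi.
Proof. intros a b. apply phi_exRInt. Qed.

Lemma locint_cont : forall f, (forall x, continuous f x) -> locint f.
Proof. intros f H a b. apply exR_cont. intros; auto. Qed.

Lemma locint_mult_cont : forall f g, (forall x, continuous f x) -> (forall x, continuous g x) -> locint (fun x => f x * g x).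
Proof.
  intros f g Hf Hg. apply locint_cont. intros x.
  apply (continuous_mult (K:=R_AbsRing)); auto.
Qed.

Lemma Imp_phi : Imp phi 1.
Proof.
  intros e He. destruct (Phi_limits (e / 4)) as [M [HM H]]. lra.
  exists M. intros a b Ha Hb.
  rewrite <- Phi_diff.
  assert (A : Phi a <= Phi (- M)) by (apply Phi_le; lra).
  destruct (H M (Rle_refl _)) as [B1 B2]. assert (Phi M <= Phi b) by (apply Phi_le; lra).
  destruct (Phi_range a). destruct (Phi_range b).
  apply Rabs_lt_between. lra.
Qed.

Lemma IntR_phi : IntR phi = 1.
Proof. apply IntR_val. apply locint_phi. apply Imp_phi. Qed.

Lemma Imp_phi_le : forall p, Imp (fun y => phi y * le1 y p) (Phi p).
Proof.
  intros p e He. destruct (Phi_limits (e / 2)) as [M [HM H]]. lra.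
  exists (Rmax M (Rabs p)). intros a b Ha Hb.
  assert (M <= Rmax M (Rabs p)) by apply Rmax_l. assert (Rabs p <= Rmax M (Rabs p)) by apply Rmax_r.
  assert (Hp := proj1 (Rabs_le_between p (Rabs p)) (Rle_refl _)).
  assert (L : locint (fun y => phi y * le1 y p)) by (apply locint_le, locint_phi).
  rewrite <- (RInt_Chasles (V:=R_CompleteNormedModule) _ a p b) by apply L.
  rewrite (RInt_ext _ phi a p). rewrite (RInt_ext _ (fun _ => 0) p b).
  rewrite RInt_const. unfold scal, plus; simpl; unfold mult; simpl.
  rewrite <- Phi_diff.
  assert (A : Phi a <= Phi (- M)) by (apply Phi_le; lra).
  destruct (H M (Rle_refl _)) as [B1 B2]. destruct (Phi_range a).
  apply Rabs_lt_between. lra.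
  - intros x Hx. rewrite Rmin_left, Rmax_right in Hx by lra. unfold le1; destruct Rle_dec; lra.
  - intros x Hx. rewrite Rmin_left, Rmax_right in Hx by lra. unfold le1; destruct Rle_dec; lra.
Qed.

Lemma IntR_phi_le : forall p, IntR (fun y => phi y * le1 y p) = Phi p.
Proof. intros p. apply IntR_val. apply locint_le, locint_phi. apply Imp_phi_le. Qed.

Definition Gfun (c s : R) : R := if Rlt_dec 0 c then Phi (s / c) else le1 0 s.
Definition Kf (a b c w1 w2 x : R) : R := le1 (a * x) w1 * Gfun c (w2 - b * x).
Definition PsiA (a b c w1 w2 : R) : R := IntR (fun x => phi x * Kf a b c w1 w2 x).

Lemma le1_range : forall x y, 0 <= le1 x y <= 1.
Proof. intros; unfold le1; destruct Rle_dec; lra. Qed.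

Lemma Gfun_range : forall c s, 0 <= Gfun c s <= 1.
Proof. intros; unfold Gfun; destruct Rlt_dec. destruct (Phi_range (s / c)); lra. apply le1_range. Qed.

Lemma Kf_range : forall a b c w1 w2 x, 0 <= Kf a b c w1 w2 x <= 1.
Proof.
  intros. unfold Kf. destruct (le1_range (a * x) w1). destruct (Gfun_range c (w2 - b * x)). split; nra.
Qed.

Lemma good_phik : forall k, locint (fun y => phi y * k y) -> (forall y, 0 <= k y <= 1) -> good (fun y => phi y * k y).
Proof.
  intros k L H. split; auto. exists 1. split. lra. intros y.
  assert (P := phi_pos y). destruct (H y). rewrite Rabs_right by nra. nra.
Qed.

Lemma good_phik_bound : forall k C, locint (fun y => phi y * k y) -> 0 <= C -> (forall y, Rabs (k y) <= C) -> good (fun y => phi y * k y).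
Proof.
  intros k C L C0 H. split; auto. exists C. split; auto. intros y.
  assert (P := phi_pos y). rewrite Rabs_mult, Rabs_right by lra. specialize (H y). nra.
Qed.

Lemma Phi0_deriv : forall x, is_derive Phi0 x (phi x).
Proof.
  intros x. apply is_derive_RInt with 0. apply filter_forall. intros y. apply (RInt_correct (V:=R_CompleteNormedModule)), phi_exRInt.
  apply phi_cont.
Qed.

Lemma Phi_cont : forall x, continuous Phi x.
Proof.
  intros x. unfold Phi.
  apply (continuous_plus (U:=R_NormedModule) (fun _ => / 2) Phi0). apply continuous_const.
  apply exd_cont. eexists. apply Phi0_deriv.
Qed.

Lemma Phi_aff_cont : forall u v, forall x, continuous (fun x => Phi (u * x + v)) x.
Proof.
  intros u v x. apply (continuous_comp (U:=R_UniformSpace) (fun x => u * x + v) Phi).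
  apply exd_cont. auto_derive. auto. apply Phi_cont.
Qed.

Lemma le1_shift : forall y w, le1 0 (w - y) = le1 y w.
Proof. intros. unfold le1. destruct Rle_dec; destruct Rle_dec; auto; lra. Qed.

Lemma locint_outer : forall a b c w1 w2, locint (fun x => phi x * Kf a b c w1 w2 x).
Proof.
  intros a b c w1 w2. unfold Kf, Gfun. destruct (Rlt_dec 0 c) as [Hc|Hc].
  - apply (locint_ext (fun x => (phi x * Phi ((- b / c) * x + w2 / c)) * le1 (a * x) w1)).
    + intros x. replace ((w2 - b * x) / c) with (- b / c * x + w2 / c) by (field; lra). ring.
    + apply locint_lin. apply locint_mult_cont. apply phi_cont. apply Phi_aff_cont.
  - apply (locint_ext (fun x => (phi x * le1 (a * x) w1) * le1 (b * x) w2)).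
    + intros x. rewrite le1_shift. ring.
    + apply locint_lin. apply locint_lin. apply locint_phi.
Qed.

Lemma good_outer : forall a b c w1 w2, good (fun x => phi x * Kf a b c w1 w2 x).
Proof. intros. apply good_phik. apply locint_outer. intros; apply Kf_range. Qed.

Lemma ind2_le1 : forall p q z1 z2, ind2 p q z1 z2 = le1 p z1 * le1 q z2.
Proof. intros. unfold ind2, le1. destruct Rle_dec; destruct Rle_dec; ring. Qed.

Lemma inner_val : forall a b c z1 z2 x, 0 <= c ->
  IntR (fun y => phi x * phi y * ind2 (a * x) (b * x + c * y) z1 z2) = phi x * Kf a b c z1 z2 x.
Proof.
  intros a b c z1 z2 x Hc.
  assert (E : (fun y => phi x * phi y * ind2 (a * x) (b * x + c * y) z1 z2) =
              (fun y => (phi x * le1 (a * x) z1) * (phi y * le1 (c * y) (z2 - b * x)))).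
  { apply functional_extensionality. intros y. rewrite ind2_le1.
    replace (le1 (b * x + c * y) z2) with (le1 (c * y) (z2 - b * x)). ring.
    unfold le1; destruct Rle_dec; destruct Rle_dec; auto; lra. }
  rewrite E. rewrite IntR_scal.
  2: { apply good_phik. apply (locint_ext (fun y => phi y * le1 (c * y) (z2 - b * x))). auto. apply locint_lin, locint_phi.
       intros; apply le1_range. }
  unfold Kf, Gfun. destruct (Rlt_dec 0 c) as [Hc'|Hc'].
  - replace (fun y => phi y * le1 (c * y) (z2 - b * x)) with (fun y => phi y * le1 y ((z2 - b * x) / c)).
    rewrite IntR_phi_le. ring.
    apply functional_extensionality. intros y. f_equal. unfold le1.
    destruct Rle_dec as [r|r]; destruct Rle_dec as [r'|r']; auto; exfalso.
    + apply r'. apply (Rmult_le_compat_l c) in r; [|lra]. replace (c * ((z2 - b * x) / c)) with (z2 - b * x) in r by (field; lra). lra.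
    + apply r. apply (Rmult_le_reg_l c). lra. replace (c * ((z2 - b * x) / c)) with (z2 - b * x) by (field; lra). lra.
  - assert (c = 0) by lra. subst c.
    replace (fun y => phi y * le1 (0 * y) (z2 - b * x)) with (fun y => le1 0 (z2 - b * x) * phi y).
    rewrite IntR_scal. rewrite IntR_phi. ring.
    split. apply locint_phi. exists 1. split. lra. intros y. assert (P := phi_pos y). rewrite Rabs_right; lra.
    apply functional_extensionality. intros y. rewrite Rmult_0_l. ring.
Qed.

Lemma Psi_eq : forall V z1 z2, Psi z1 z2 V = PsiA (chol_a V) (chol_b V) (chol_c V) z1 z2.
Proof.
  intros V z1 z2. unfold Psi, PsiA. f_equal. apply functional_extensionality. intros x.
  apply inner_val. unfold chol_c. apply sqrt_pos.
Qed.

Lemma le1_mono : forall x y y', y <= y' -> le1 x y <= le1 x y'.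
Proof. intros. unfold le1. destruct Rle_dec; destruct Rle_dec; lra. Qed.

Lemma Gfun_mono : forall c s s', s <= s' -> Gfun c s <= Gfun c s'.
Proof.
  intros c s s' H. unfold Gfun. destruct Rlt_dec.
  - apply Phi_le. unfold Rdiv. apply Rmult_le_compat_r; auto. left; apply Rinv_0_lt_compat; auto.
  - apply le1_mono; auto.
Qed.

Lemma Kf_mono : forall a b c w1 w2 t x, 0 <= t -> Kf a b c w1 w2 x <= Kf a b c (w1 + t) (w2 + t) x.
Proof.
  intros. unfold Kf.
  assert (A := le1_mono (a * x) w1 (w1 + t) ltac:(lra)).
  assert (B := Gfun_mono c (w2 - b * x) (w2 + t - b * x) ltac:(lra)).
  destruct (le1_range (a * x) w1). destruct (Gfun_range c (w2 - b * x)).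
  destruct (le1_range (a * x) (w1 + t)). destruct (Gfun_range c (w2 + t - b * x)).
  nra.
Qed.

Lemma incr_eq : forall a b c w1 w2 t,
  PsiA a b c (w1 + t) (w2 + t) - PsiA a b c w1 w2 =
  IntR (fun x => phi x * Kf a b c (w1 + t) (w2 + t) x - phi x * Kf a b c w1 w2 x).
Proof.
  intros. unfold PsiA. symmetry.
  apply (IntR_minus (fun x => phi x * Kf a b c (w1 + t) (w2 + t) x) (fun x => phi x * Kf a b c w1 w2 x));
  apply good_outer.
Qed.

Lemma incr_lower : forall a b c w1 w2 t l len beta B, 0 <= t -> 0 <= len -> 0 <= beta -> - B <= l -> l + len <= B ->
  (forall x, l < x < l + len -> beta <= Kf a b c (w1 + t) (w2 + t) x - Kf a b c w1 w2 x) ->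
  len * beta * phi B <= PsiA a b c (w1 + t) (w2 + t) - PsiA a b c w1 w2.
Proof.
  intros a b c w1 w2 t l len beta B Ht Hlen Hb Hl1 Hl2 H.
  rewrite incr_eq.
  assert (G : good (fun x => phi x * Kf a b c (w1 + t) (w2 + t) x - phi x * Kf a b c w1 w2 x)).
  { apply (good_minus (fun x => phi x * Kf a b c (w1 + t) (w2 + t) x) (fun x => phi x * Kf a b c w1 w2 x)); apply good_outer. }
  eapply Rle_trans. 2: apply (IntR_lower _ l (l + len) G).
  - replace (len * beta * phi B) with ((l + len - l) * (beta * phi B)) by ring.
    apply RInt_lower. lra. apply G.
    intros x Hx. specialize (H x Hx). assert (P := phi_mono x B ltac:(apply Rabs_le; lra)).
    assert (P0 := phi_pos B). nra.
  - intros x. assert (P := phi_pos x). assert (K := Kf_mono a b c w1 w2 t x Ht). nra.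
  - lra.
Qed.

Lemma witness : forall k M theta, 0 <= M -> 0 <= theta -> locint (fun x => phi x * k x) ->
  theta < RInt (fun x => phi x * k x) (- M) M -> exists x, - M < x < M /\ theta < k x.
Proof.
  intros k M theta HM Ht L H.
  apply NNPP. intros N.
  assert (forall x, - M < x < M -> k x <= theta).
  { intros x Hx. apply Rnot_lt_le. intros Hlt. apply N. exists x. auto. }
  assert (RInt (fun x => phi x * k x) (- M) M <= RInt (fun x => theta * phi x) (- M) M).
  { apply RInt_le. lra. apply L. apply locint_scal, locint_phi.
    intros x Hx. specialize (H0 x Hx). assert (P := phi_pos x). nra. }
  replace (RInt (fun x => theta * phi x) (- M) M) with (theta * RInt phi (- M) M) in H1
    by (symmetry; exact (RInt_scal (V:=R_CompleteNormedModule) phi (- M) M theta (phi_exRInt _ _))).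
  rewrite <- Phi_diff in H1. destruct (Phi_range M). destruct (Phi_range (- M)). nra.
Qed.

Lemma mass_k : forall a b c w1 w2 M, 0 <= M ->
  PsiA a b c w1 w2 - tail M <= RInt (fun x => phi x * Kf a b c w1 w2 x) (- M) M.
Proof.
  intros a b c w1 w2 M HM. unfold PsiA.
  assert (T := IntR_tail (fun x => phi x * Kf a b c w1 w2 x) 1 M (locint_outer a b c w1 w2) ltac:(lra)).
  assert (T' : Rabs (IntR (fun x => phi x * Kf a b c w1 w2 x) - RInt (fun x => phi x * Kf a b c w1 w2 x) (- M) M) <= 1 * tail M).
  { apply T; auto. intros x. assert (P := phi_pos x). destruct (Kf_range a b c w1 w2 x).
    rewrite Rabs_right by nra. nra. }
  apply Rabs_le_between in T'. lra.
Qed.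

Lemma mass_1k : forall a b c w1 w2 M, 0 <= M ->
  1 - tail M - PsiA a b c w1 w2 <= RInt (fun x => phi x * (1 - Kf a b c w1 w2 x)) (- M) M.
Proof.
  intros a b c w1 w2 M HM.
  rewrite (RInt_ext _ (fun x => minus (phi x) (phi x * Kf a b c w1 w2 x))).
  2: { intros x _. unfold minus, plus, opp; simpl. ring. }
  rewrite (RInt_minus (V:=R_CompleteNormedModule)).
  2: apply phi_exRInt. 2: apply locint_outer.
  unfold minus, plus, opp; simpl. rewrite <- Phi_diff.
  assert (L := IntR_lower (fun x => phi x * Kf a b c w1 w2 x) (- M) M (good_outer a b c w1 w2)).
  assert (L' : RInt (fun x => phi x * Kf a b c w1 w2 x) (- M) M <= PsiA a b c w1 w2).
  { apply L. intros x. assert (P := phi_pos x). destruct (Kf_range a b c w1 w2 x). nra. lra. }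
  unfold tail. lra.
Qed.

Lemma le1_1 : forall x y, x <= y -> le1 x y = 1.
Proof. intros. unfold le1. destruct Rle_dec; lra. Qed.

Lemma le1_0 : forall x y, y < x -> le1 x y = 0.
Proof. intros. unfold le1. destruct Rle_dec; lra. Qed.

Lemma Kf0_eq : forall a b w1 w2 x, Kf a b 0 w1 w2 x = le1 (a * x) w1 * le1 (b * x) w2.
Proof.
  intros. unfold Kf, Gfun. destruct Rlt_dec. lra. rewrite le1_shift. reflexivity.
Qed.

Lemma Kfp_eq : forall a b c w1 w2 x, 0 < c -> Kf a b c w1 w2 x = le1 (a * x) w1 * Phi ((w2 - b * x) / c).
Proof. intros. unfold Kf, Gfun. destruct Rlt_dec. reflexivity. lra. Qed.

Lemma Phi_incr' : forall x y R, x <= y -> Rabs x <= R -> Rabs y <= R -> (y - x) * phi R <= Phi y - Phi x.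
Proof.
  intros x y R H Hx Hy. destruct H as [H|H].
  - eapply Rle_trans. 2: apply Phi_incr; auto. apply Rmult_le_compat_l. lra.
    apply phi_mono. unfold Rmax. destruct Rle_dec; rewrite Rabs_right; try lra;
      apply Rle_ge; apply Rabs_pos.
  - subst. lra.
Qed.

Lemma abs_mul_le : forall b d D, Rabs d <= D -> Rabs (b * d) <= Rabs b * D.
Proof. intros. rewrite Rabs_mult. apply Rmult_le_compat_l; auto. apply Rabs_pos. Qed.

Lemma key_posA : forall a b c w1 w2 t M x0 x1 q1 q2, 0 <= a -> 0 < c -> 0 <= t <= 1 -> 0 <= M ->
  - M < x0 < M -> - M < x1 < M -> a * x0 <= w1 -> a * x1 <= w1 ->
  q1 < (w2 - b * x0) / c -> (w2 - b * x1) / c < q2 ->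
  1 * (t * (phi (Rabs q1 + Rabs q2 + (Rabs b * (2 * M + 1) + 1) / c) / c)) * phi (M + 1)
   <= PsiA a b c (w1 + t) (w2 + t) - PsiA a b c w1 w2.
Proof.
  intros a b c w1 w2 t M x0 x1 q1 q2 Ha Hc Ht HM H0 H1 A0 A1 Q1 Q2.
  set (R := Rabs q1 + Rabs q2 + (Rabs b * (2 * M + 1) + 1) / c).
  apply incr_lower with (l := x0 - 1). lra. lra.
  apply Rmult_le_pos. lra. apply Rdiv_le_0_compat. left; apply phi_pos. lra.
  lra. lra.
  intros x Hx. rewrite !Kfp_eq by auto.
  rewrite le1_1 by nra. rewrite le1_1 by nra. rewrite !Rmult_1_l.
  set (u := (w2 - b * x) / c).
  replace ((w2 + t - b * x) / c) with (u + t / c) by (unfold u; field; lra).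
  assert (E0 : u = (w2 - b * x0) / c + (b * (x0 - x)) / c) by (unfold u; field; lra).
  assert (E1 : u = (w2 - b * x1) / c + (b * (x1 - x)) / c) by (unfold u; field; lra).
  assert (B0 := abs_mul_le b (x0 - x) 1 ltac:(apply Rabs_le; lra)).
  assert (B1 := abs_mul_le b (x1 - x) (2 * M + 1) ltac:(apply Rabs_le; lra)).
  apply Rabs_le_between in B0. apply Rabs_le_between in B1.
  assert (Hb0 : 0 <= Rabs b) by apply Rabs_pos.
  assert (D1 : b * (x0 - x) / c >= - (Rabs b * 1) / c) by (unfold Rdiv; apply Rle_ge, Rmult_le_compat_r; [left; apply Rinv_0_lt_compat; auto | lra]).
  assert (D2 : b * (x1 - x) / c <= (Rabs b * (2 * M + 1)) / c) by (unfold Rdiv; apply Rmult_le_compat_r; [left; apply Rinv_0_lt_compat; auto | lra]).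
  assert (D3 : 0 <= t / c <= 1 / c) by (split; unfold Rdiv; [apply Rmult_le_pos; [lra| left; apply Rinv_0_lt_compat; auto] | apply Rmult_le_compat_r; [left; apply Rinv_0_lt_compat; auto | lra]]).
  assert (D4 : Rabs b * 1 / c <= (Rabs b * (2 * M + 1) + 1) / c) by (unfold Rdiv; apply Rmult_le_compat_r; [left; apply Rinv_0_lt_compat; auto | nra]).
  assert (D5 : (Rabs b * (2 * M + 1)) / c + 1 / c = (Rabs b * (2 * M + 1) + 1) / c) by (field; lra).
  assert (Aq1 := Rle_abs q1). assert (Aq1' : - q1 <= Rabs q1) by (rewrite <- Rabs_Ropp; apply Rle_abs).
  assert (Aq2 := Rle_abs q2). assert (Aq2' : - q2 <= Rabs q2) by (rewrite <- Rabs_Ropp; apply Rle_abs).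
  assert (P := Phi_incr' u (u + t / c) R ltac:(lra) ltac:(apply Rabs_le; unfold R; lra) ltac:(apply Rabs_le; unfold R; lra)).
  replace (t * (phi R / c)) with ((u + t / c - u) * phi R) by (field; lra). lra.
Qed.

Lemma key_posB : forall a b c w1 w2 t M m x0 x1 q1, 0 < a -> 0 < c -> 0 <= t <= 1 -> 0 <= M -> 1 <= m -> a <= m ->
  - M < x0 < M -> - M < x1 < M -> a * x0 <= w1 -> w1 < a * x1 ->
  q1 < (w2 - b * x0) / c ->
  (t / m) * Phi (q1 - Rabs b * (2 * M + 1) / c) * phi (M + 1)
   <= PsiA a b c (w1 + t) (w2 + t) - PsiA a b c w1 w2.
Proof.
  intros a b c w1 w2 t M m x0 x1 q1 Ha Hc Ht HM Hm Ham H0 H1 A0 A1 Q1.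
  set (xi := w1 / a).
  assert (Exi : a * xi = w1) by (unfold xi; field; lra).
  assert (Xi0 : x0 <= xi) by nra. assert (Xi1 : xi < x1) by nra.
  assert (Tm : 0 <= t / m <= 1) by (split; [apply Rdiv_le_0_compat; lra | apply (Rmult_le_reg_r m); [lra|]; unfold Rdiv; rewrite Rmult_assoc, Rinv_l by lra; lra]).
  assert (aTm : a * (t / m) <= t).
  { replace (a * (t / m)) with (t * (a / m)) by (field; lra).
    assert (a / m <= 1) by (apply (Rmult_le_reg_r m); [lra|]; unfold Rdiv; rewrite Rmult_assoc, Rinv_l by lra; lra).
    nra. }
  apply incr_lower with (l := xi). lra. lra. left; apply Phi_range. lra. lra.
  intros x Hx. rewrite !Kfp_eq by auto.
  rewrite (le1_0 (a * x) w1) by nra. rewrite le1_1 by nra. rewrite Rmult_1_l, Rmult_0_l, Rminus_0_r.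
  apply Rle_trans with (Phi ((w2 - b * x) / c)). 2: apply Phi_le; unfold Rdiv; apply Rmult_le_compat_r; [left; apply Rinv_0_lt_compat; auto | lra].
  apply Phi_le.
  assert (E0 : (w2 - b * x) / c = (w2 - b * x0) / c + (b * (x0 - x)) / c) by (field; lra).
  assert (B0 := abs_mul_le b (x0 - x) (2 * M + 1) ltac:(apply Rabs_le; lra)).
  apply Rabs_le_between in B0.
  assert (D1 : b * (x0 - x) / c >= - (Rabs b * (2 * M + 1)) / c) by (unfold Rdiv; apply Rle_ge, Rmult_le_compat_r; [left; apply Rinv_0_lt_compat; auto | lra]).
  replace (- (Rabs b * (2 * M + 1)) / c) with (- (Rabs b * (2 * M + 1) / c)) in D1 by (field; lra).
  lra.
Qed.

Lemma key_zero : forall a b w1 w2 t M m x0 x1, 0 < a -> 0 <= t <= 1 -> 0 <= M -> 1 <= m -> a <= m -> Rabs b <= m ->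
  - M < x0 < M -> - M < x1 < M -> a * x0 <= w1 -> b * x0 <= w2 -> (w1 < a * x1 \/ w2 < b * x1) ->
  (t / m) * 1 * phi (M + 1) <= PsiA a b 0 (w1 + t) (w2 + t) - PsiA a b 0 w1 w2.
Proof.
  intros a b w1 w2 t M m x0 x1 Ha Ht HM Hm Ham Hbm H0 H1 A0 B0 W.
  assert (Tm : 0 <= t / m <= 1) by (split; [apply Rdiv_le_0_compat; lra | apply (Rmult_le_reg_r m); [lra|]; unfold Rdiv; rewrite Rmult_assoc, Rinv_l by lra; lra]).
  assert (aTm : a * (t / m) <= t).
  { replace (a * (t / m)) with (t * (a / m)) by (field; lra).
    assert (a / m <= 1) by (apply (Rmult_le_reg_r m); [lra|]; unfold Rdiv; rewrite Rmult_assoc, Rinv_l by lra; lra).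
    nra. }
  assert (bTm : Rabs b * (t / m) <= t).
  { replace (Rabs b * (t / m)) with (t * (Rabs b / m)) by (field; lra).
    assert (Rabs b / m <= 1) by (apply (Rmult_le_reg_r m); [lra|]; unfold Rdiv; rewrite Rmult_assoc, Rinv_l by lra; lra).
    nra. }
  assert (Ab := Rle_abs b). assert (Ab' : - b <= Rabs b) by (rewrite <- Rabs_Ropp; apply Rle_abs).
  assert (GEN : forall l, - (M + 1) <= l -> l + t / m <= M + 1 ->
     (forall x, l < x < l + t / m -> (w1 < a * x \/ w2 < b * x) /\ a * x <= w1 + t /\ b * x <= w2 + t) ->
     (t / m) * 1 * phi (M + 1) <= PsiA a b 0 (w1 + t) (w2 + t) - PsiA a b 0 w1 w2).
  { intros l L1 L2 HL. apply incr_lower with (l := l); try lra.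
    intros x Hx. destruct (HL x Hx) as [[K|K] [K1 K2]]; rewrite !Kf0_eq;
      rewrite (le1_1 (a * x) (w1 + t)) by lra; rewrite (le1_1 (b * x) (w2 + t)) by lra.
    - rewrite (le1_0 (a * x) w1) by lra. lra.
    - rewrite (le1_0 (b * x) w2) by lra. lra. }
  set (xi := w1 / a). assert (Exi : a * xi = w1) by (unfold xi; field; lra).
  destruct (Rle_dec (a * x1) w1) as [Ha1|Ha1].
  - destruct W as [W|W]. lra.
    destruct (Rtotal_order b 0) as [Hb|[Hb|Hb]].
    + set (ze := w2 / b). assert (Eze : b * ze = w2) by (unfold ze; field; lra).
      assert (Ze0 : ze <= x0) by nra. assert (Ze1 : x1 < ze) by nra.
      apply (GEN (ze - t / m)). lra. lra.
      intros x Hx. split. right; nra. split. nra. nra.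
    + subst b. lra.
    + set (ze := w2 / b). assert (Eze : b * ze = w2) by (unfold ze; field; lra).
      assert (Ze0 : x0 <= ze) by nra. assert (Ze1 : ze < x1) by nra.
      apply (GEN ze). lra. lra.
      intros x Hx. split. right; nra. split. assert (a * x < a * (ze + t / m)) by nra. nra. nra.
  - assert (W' : w1 < a * x1) by lra.
    assert (Xi0 : x0 <= xi) by nra. assert (Xi1 : xi < x1) by nra.
    destruct (Rle_dec b 0) as [Hb|Hb].
    + apply (GEN xi). lra. lra. intros x Hx. split. left; nra. split. nra. nra.
    + set (ze := w2 / b). assert (Eze : b * ze = w2) by (unfold ze; field; lra).
      assert (Ze0 : x0 <= ze) by nra.
      apply (GEN (Rmin xi ze)).
      * unfold Rmin; destruct Rle_dec; lra.
      * unfold Rmin; destruct Rle_dec; lra.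
      * intros x Hx. unfold Rmin in Hx; destruct Rle_dec in Hx.
        { split. left; nra. split. nra. assert (b * x < b * (xi + t / m)) by nra. nra. }
        { split. right; nra. split. assert (a * x < a * (ze + t / m)) by nra. nra. nra. }
Qed.

Lemma key : forall a b c eps, 0 <= a -> 0 <= c -> (c = 0 -> 0 < a) -> 0 < eps < 1 ->
  exists c1, 0 < c1 /\ forall t w1 w2, 0 <= t <= 1 -> (1 - eps) / 2 <= PsiA a b c w1 w2 -> PsiA a b c w1 w2 < 1 - eps ->
   c1 * t <= PsiA a b c (w1 + t) (w2 + t) - PsiA a b c w1 w2.
Proof.
  intros a b c eps Ha Hc Hca He.
  set (d := (1 - eps) / 2). set (eta := d * eps / 4).
  assert (Hd : 0 < d < / 2) by (unfold d; lra).
  assert (Heta : 0 < eta) by (unfold eta; nra).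
  destruct (tail_small eta Heta) as [M [HM1 HT]]. assert (TM := HT M (Rle_refl _)).
  destruct (Phi_limits (d / 2)) as [N1 [HN1 HN1']]. lra. destruct (HN1' N1 (Rle_refl _)) as [PN1 _].
  destruct (Phi_limits (eps / 2)) as [N2 [HN2 HN2']]. lra. destruct (HN2' N2 (Rle_refl _)) as [_ PN2].
  set (m := Rmax 1 (Rmax a (Rabs b))).
  assert (Hm1 : 1 <= m) by apply Rmax_l.
  assert (Hma : a <= m) by (eapply Rle_trans; [apply Rmax_l|apply Rmax_r]).
  assert (Hmb : Rabs b <= m) by (eapply Rle_trans; [apply Rmax_r|apply Rmax_r]).
  assert (W : forall w1 w2, d <= PsiA a b c w1 w2 -> PsiA a b c w1 w2 < 1 - eps ->
    exists x0 x1, - M < x0 < M /\ - M < x1 < M /\ d / 2 < Kf a b c w1 w2 x0 /\ eps / 2 < 1 - Kf a b c w1 w2 x1).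
  { intros w1 w2 P1 P2.
    assert (A := mass_k a b c w1 w2 M ltac:(lra)).
    assert (B := mass_1k a b c w1 w2 M ltac:(lra)).
    destruct (witness (Kf a b c w1 w2) M (d / 2) ltac:(lra) ltac:(lra) (locint_outer a b c w1 w2)) as [x0 [Hx0 K0]].
    { unfold eta in TM. nra. }
    destruct (witness (fun x => 1 - Kf a b c w1 w2 x) M (eps / 2) ltac:(lra) ltac:(lra)) as [x1 [Hx1 K1]].
    { apply (locint_ext (fun x => phi x - phi x * Kf a b c w1 w2 x)). intros; ring.
      apply locint_minus. apply locint_phi. apply locint_outer. }
    { unfold eta in TM. unfold d in *. nra. }
    exists x0, x1. auto. }
  destruct (Rlt_dec 0 c) as [Hc'|Hc'].
  - set (R := Rabs (- N1) + Rabs N2 + (Rabs b * (2 * M + 1) + 1) / c).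
    set (ga := Phi (- N1 - Rabs b * (2 * M + 1) / c)).
    assert (PR := phi_pos R). assert (PM := phi_pos (M + 1)). assert (Ga : 0 < ga) by apply Phi_range.
    assert (R1 : 0 < phi R / c) by (apply Rdiv_lt_0_compat; auto).
    assert (R2 : 0 < ga / m) by (apply Rdiv_lt_0_compat; lra).
    exists (phi (M + 1) * Rmin (phi R / c) (ga / m)). split.
    { apply Rmult_lt_0_compat; auto. unfold Rmin; destruct Rle_dec; auto. }
    intros t w1 w2 Ht P1 P2. destruct (W w1 w2 P1 P2) as [x0 [x1 [Hx0 [Hx1 [K0 K1]]]]].
    rewrite Kfp_eq in K0, K1 by auto.
    assert (A0 : a * x0 <= w1).
    { destruct (Rle_dec (a * x0) w1) as [r|r]; auto. rewrite le1_0 in K0 by lra. lra. }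
    rewrite le1_1 in K0 by auto.
    assert (Q1 : - N1 < (w2 - b * x0) / c).
    { apply Rnot_le_lt. intros r. apply Phi_le in r. lra. }
    assert (Rm1 : Rmin (phi R / c) (ga / m) <= phi R / c) by apply Rmin_l.
    assert (Rm2 : Rmin (phi R / c) (ga / m) <= ga / m) by apply Rmin_r.
    destruct (Rle_dec (a * x1) w1) as [A1|A1].
    + rewrite le1_1 in K1 by auto.
      assert (Q2 : (w2 - b * x1) / c < N2).
      { apply Rnot_le_lt. intros r. apply Phi_le in r. lra. }
      assert (X := key_posA a b c w1 w2 t M x0 x1 (- N1) N2 Ha Hc' Ht ltac:(lra) Hx0 Hx1 A0 A1 Q1 Q2).
      fold R in X.
      assert (phi (M + 1) * Rmin (phi R / c) (ga / m) * t <= phi (M + 1) * (phi R / c) * t).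
      { apply Rmult_le_compat_r. lra. apply Rmult_le_compat_l; lra. }
      lra.
    + assert (Ha' : 0 < a).
      { destruct Ha as [Ha|Ha]; auto. subst a. lra. }
      assert (X := key_posB a b c w1 w2 t M m x0 x1 (- N1) Ha' Hc' Ht ltac:(lra) Hm1 Hma Hx0 Hx1 A0 ltac:(lra) Q1).
      fold ga in X.
      assert (phi (M + 1) * Rmin (phi R / c) (ga / m) * t <= phi (M + 1) * (ga / m) * t).
      { apply Rmult_le_compat_r. lra. apply Rmult_le_compat_l; lra. }
      replace (t / m * ga * phi (M + 1)) with (phi (M + 1) * (ga / m) * t) in X by (field; lra).
      lra.
  - assert (c = 0) by lra. subst c. assert (Ha' := Hca eq_refl).
    assert (PM := phi_pos (M + 1)).
    exists (phi (M + 1) / m). split. apply Rdiv_lt_0_compat; lra.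
    intros t w1 w2 Ht P1 P2. destruct (W w1 w2 P1 P2) as [x0 [x1 [Hx0 [Hx1 [K0 K1]]]]].
    rewrite Kf0_eq in K0, K1.
    assert (A0 : a * x0 <= w1).
    { destruct (Rle_dec (a * x0) w1) as [r|r]; auto. rewrite le1_0 in K0 by lra. lra. }
    assert (B0 : b * x0 <= w2).
    { destruct (Rle_dec (b * x0) w2) as [r|r]; auto. rewrite (le1_0 (b * x0)) in K0 by lra. lra. }
    assert (W1 : w1 < a * x1 \/ w2 < b * x1).
    { destruct (Rle_dec (a * x1) w1) as [r|r]. 2: left; lra.
      destruct (Rle_dec (b * x1) w2) as [r'|r']. 2: right; lra.
      rewrite le1_1 in K1 by auto. rewrite le1_1 in K1 by auto. lra. }
    assert (X := key_zero a b w1 w2 t M m x0 x1 Ha' Ht ltac:(lra) Hm1 Hma Hmb Hx0 Hx1 A0 B0 W1).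
    replace (t / m * 1 * phi (M + 1)) with (phi (M + 1) / m * t) in X by (field; lra).
    lra.
Qed.

Lemma PsiA_mono : forall a b c w1 w2 t, 0 <= t -> PsiA a b c w1 w2 <= PsiA a b c (w1 + t) (w2 + t).
Proof.
  intros. assert (X := incr_lower a b c w1 w2 t 0 0 0 0 H ltac:(lra) ltac:(lra) ltac:(lra) ltac:(lra)).
  assert (X' : 0 * 0 * phi 0 <= PsiA a b c (w1 + t) (w2 + t) - PsiA a b c w1 w2).
  { apply X. intros x Hx. lra. }
  lra.
Qed.

Lemma chol_facts : forall V, PSD V -> nonzero_mat V -> chol_c V = 0 -> 0 < chol_a V.
Proof.
  intros V [Hs Hq] Hnz Hc. unfold chol_a, chol_c in *.
  assert (H11 : 0 <= m11 V) by (specialize (Hq 1 0); nra).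
  assert (H22 : 0 <= m22 V) by (specialize (Hq 0 1); nra).
  destruct (Req_dec (m11 V) 0) as [E|E].
  - exfalso.
    assert (E12 : m12 V = 0).
    { destruct (Req_dec (m12 V) 0) as [e|e]; auto. exfalso.
      specialize (Hq (- (m22 V + 1) / (2 * m12 V)) 1). rewrite E, <- Hs in Hq.
      replace (- (m22 V + 1) / (2 * m12 V) * (0 * (- (m22 V + 1) / (2 * m12 V)) + m12 V * 1) +
               1 * (m12 V * (- (m22 V + 1) / (2 * m12 V)) + m22 V * 1)) with (- 1) in Hq by (field; auto). lra. }
    rewrite E12, E in Hc. replace (m22 V - 0 * 0 / 0) with (m22 V) in Hc by (unfold Rdiv; ring).
    apply Hnz. repeat split; auto. rewrite <- Hs; auto.
    destruct H22 as [H22|H22]; auto. apply sqrt_lt_R0 in H22. lra.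
  - apply sqrt_lt_R0. lra.
Qed.

Theorem lemma1 :
  forall (V : Mat2) (eps : R),
    PSD V -> nonzero_mat V -> 0 < eps < 1 ->
    exists h : R,
      forall lam : nat -> R,
        (forall n, 0 < lam n) -> Un_cv lam 0 ->
        exists N : nat, forall n : nat, (N <= n)%nat ->
          forall z : R * R, PsiInv V (eps + lam n) z ->
            exists a : R * R, PsiInv V eps a /\
              z = (fst a + h * lam n, snd a + h * lam n).
Proof.
  intros V eps HP Hnz He.
  destruct (key (chol_a V) (chol_b V) (chol_c V) eps) as [c1 [Hc1 K]].
  - unfold chol_a; apply sqrt_pos.
  - unfold chol_c; apply sqrt_pos.
  - intros Hc. apply chol_facts; auto.
  - auto.
  - exists (1 / c1). intros lam Hpos Hcv.
    destruct (Hcv (Rmin ((1 - eps) / 2) c1)) as [N HN].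
    { unfold Rmin; destruct Rle_dec; lra. }
    exists N. intros n Hn z Hz.
    specialize (HN n Hn). unfold R_dist in HN. rewrite Rminus_0_r in HN.
    assert (Hl := Hpos n). rewrite Rabs_right in HN by lra.
    assert (L1 : lam n < (1 - eps) / 2) by (eapply Rlt_le_trans; [apply HN| apply Rmin_l]).
    assert (L2 : lam n < c1) by (eapply Rlt_le_trans; [apply HN| apply Rmin_r]).
    set (t := 1 / c1 * lam n).
    assert (Ht : 0 <= t <= 1).
    { unfold t. split. apply Rmult_le_pos; [apply Rlt_le, Rdiv_lt_0_compat| ]; lra.
      apply (Rmult_le_reg_l c1). lra. replace (c1 * (1 / c1 * lam n)) with (lam n) by (field; lra). lra. }
    exists (fst z - t, snd z - t). split.
    + unfold PsiInv in *. simpl. rewrite Psi_eq in *.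
      replace (- (fst z - t)) with (- fst z + t) by ring.
      replace (- (snd z - t)) with (- snd z + t) by ring.
      set (w1 := - fst z) in *. set (w2 := - snd z) in *.
      destruct (Rlt_dec (PsiA (chol_a V) (chol_b V) (chol_c V) w1 w2) (1 - eps)) as [Lt|Ge].
      * assert (X := K t w1 w2 Ht ltac:(lra) Lt).
        replace (c1 * t) with (lam n) in X by (unfold t; field; lra). lra.
      * assert (X := PsiA_mono (chol_a V) (chol_b V) (chol_c V) w1 w2 t ltac:(lra)). lra.
    + destruct z as [z1 z2]. simpl. fold t. f_equal; ring.
Qed.
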